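(* Let $\mathbb{E},\mathbb{F}$ be Euclidean spaces, $A\colon\mathbb{E}\to\mathbb{F}$ linear, $b\in\operatorname{Range}A$, $c\in\mathbb{E}$, and $\mathcal{K}\subseteq\mathbb{E}$ a closed convex cone with nonempty interior. Consider the primal problem $\inf\{\langle c,x\rangle: Ax=b,\ x\in\mathcal{K}\}$ and its dual $\sup\{\langle b,y\rangle: c-A^*y\in\mathcal{K}^*\}$. Suppose the primal problem is feasible with finite optimal value $\mathrm{val}$, and define $$\operatorname{cond}:=\min_{y\in\mathbb{F}:\ \|y\|=1}\ \max\{\operatorname{dist}_{\mathcal{K}^*}(A^*y),\ \langle b,y\rangle\}.$$ If $\operatorname{cond}\neq 0$, then every optimal solution $y$ of the dual problem satisfies $$\|y\|\le\frac{\max\{\|c\|,-\mathrm{val}\}}{\operatorname{cond}}.$$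
   Context: $\mathcal{K}^*:=\{z\in\mathbb{E}:\langle x,z\rangle\ge 0\ \forall x\in\mathcal{K}\}$ is the dual cone, $A^*$ the adjoint of $A$, and $\operatorname{dist}_{\mathcal{K}^*}(w)$ the Euclidean distance from $w$ to $\mathcal{K}^*$. *)

(* Defs.v *)
From HB Require Import structures.
From mathcomp Require Import all_boot all_order all_algebra.
From mathcomp Require Import all_classical all_reals all_analysis.
Set Implicit Arguments. Unset Strict Implicit. Unset Printing Implicit Defensive.
Import Order.TTheory GRing.Theory Num.Theory.
Import numFieldNormedType.Exports.
Local Open Scope classical_set_scope.
Local Open Scope ring_scope.

(* Euclidean space of dimension n modelled as row vectors 'rV[R]_n with the
   standard inner product. A linear map E -> F is a matrix A : 'M_(n,m)
   acting by x |-> x *m A; its adjoint is y |-> y *m A^T. *)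

Definition dotv (R : realType) (n : nat) (x y : 'rV[R]_n) : R :=
  \sum_(i < n) x 0 i * y 0 i.

Definition vnorm (R : realType) (n : nat) (x : 'rV[R]_n) : R :=
  Num.sqrt (dotv x x).

Definition dual_cone (R : realType) (n : nat) (K : set 'rV[R]_n) : set 'rV[R]_n :=
  [set z | forall x, K x -> 0 <= dotv x z].

Definition dist_set (R : realType) (n : nat) (S : set 'rV[R]_n) (w : 'rV[R]_n) : R :=
  inf [set vnorm (w - z) | z in S].

Definition is_cone (R : realType) (n : nat) (K : set 'rV[R]_n) : Prop :=
  forall x (t : R), K x -> 0 <= t -> K (t *: x).

Definition is_convex (R : realType) (n : nat) (K : set 'rV[R]_n) : Prop :=
  forall x y (t : R), K x -> K y -> 0 <= t <= 1 -> K (t *: x + (1 - t) *: y).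

Definition primal_feas (R : realType) (n m : nat) (A : 'M[R]_(n, m))
  (b : 'rV[R]_m) (K : set 'rV[R]_n) : set 'rV[R]_n :=
  [set x | x *m A = b /\ K x].

Definition primal_val (R : realType) (n m : nat) (A : 'M[R]_(n, m))
  (b : 'rV[R]_m) (c : 'rV[R]_n) (K : set 'rV[R]_n) : R :=
  inf [set dotv c x | x in primal_feas A b K].

Definition dual_feas (R : realType) (n m : nat) (A : 'M[R]_(n, m))
  (c : 'rV[R]_n) (K : set 'rV[R]_n) : set 'rV[R]_m :=
  [set y | dual_cone K (c - y *m A^T)].

Definition dual_optimal (R : realType) (n m : nat) (A : 'M[R]_(n, m))
  (b : 'rV[R]_m) (c : 'rV[R]_n) (K : set 'rV[R]_n) (y : 'rV[R]_m) : Prop :=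
  dual_feas A c K y /\ forall y', dual_feas A c K y' -> dotv b y' <= dotv b y.

(* cond := min over the unit sphere of max(dist_{K*}(A^* y), <b,y>).
   The minimum is attained (continuous function on a compact sphere), so it
   coincides with the infimum used here. *)
Definition cond (R : realType) (n m : nat) (A : 'M[R]_(n, m))
  (b : 'rV[R]_m) (K : set 'rV[R]_n) : R :=
  inf [set Num.max (dist_set (dual_cone K) (y *m A^T)) (dotv b y)
      | y in [set y : 'rV[R]_m | vnorm y = 1]].

(* Main.v *)
Require Import Defs.
From HB Require Import structures.
From mathcomp Require Import all_boot all_order all_algebra.
From mathcomp Require Import all_classical all_reals all_analysis.
From mathcomp Require Import ring lra.
Import Order.TTheory GRing.Theory Num.Theory.
Import numFieldNormedType.Exports.
Local Open Scope classical_set_scope.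
Local Open Scope ring_scope.

Set Implicit Arguments. Unset Strict Implicit. Unset Printing Implicit Defensive.


Lemma dotvE (R : realType) n (x y : 'rV[R]_n) : dotv x y = (x *m y^T) 0 0.
Proof. by rewrite /dotv mxE; apply: eq_bigr => i _; rewrite mxE. Qed.

Lemma dotvC (R : realType) n (x y : 'rV[R]_n) : dotv x y = dotv y x.
Proof. by rewrite /dotv; apply: eq_bigr => i _; rewrite mulrC. Qed.

Lemma dotvDl (R : realType) n (x y z : 'rV[R]_n) : dotv (x + y) z = dotv x z + dotv y z.
Proof. by rewrite /dotv -big_split; apply: eq_bigr => i _; rewrite mxE mulrDl. Qed.

Lemma dotvZl (R : realType) n a (x z : 'rV[R]_n) : dotv (a *: x) z = a * dotv x z.
Proof. by rewrite /dotv mulr_sumr; apply: eq_bigr => i _; rewrite mxE mulrA. Qed.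

Lemma dotvNl (R : realType) n (x z : 'rV[R]_n) : dotv (- x) z = - dotv x z.
Proof. by rewrite -scaleN1r dotvZl mulN1r. Qed.

Lemma dotvBl (R : realType) n (x y z : 'rV[R]_n) : dotv (x - y) z = dotv x z - dotv y z.
Proof. by rewrite dotvDl dotvNl. Qed.

Lemma dotvDr (R : realType) n (x y z : 'rV[R]_n) : dotv z (x + y) = dotv z x + dotv z y.
Proof. by rewrite dotvC dotvDl !(dotvC z). Qed.
Lemma dotvZr (R : realType) n a (x z : 'rV[R]_n) : dotv z (a *: x) = a * dotv z x.
Proof. by rewrite dotvC dotvZl dotvC. Qed.
Lemma dotvNr (R : realType) n (x z : 'rV[R]_n) : dotv z (- x) = - dotv z x.
Proof. by rewrite dotvC dotvNl dotvC. Qed.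
Lemma dotvBr (R : realType) n (x y z : 'rV[R]_n) : dotv z (x - y) = dotv z x - dotv z y.
Proof. by rewrite dotvDr dotvNr. Qed.
Lemma dotv0l (R : realType) n (z : 'rV[R]_n) : dotv 0 z = 0.
Proof. by rewrite -(scale0r (0 : 'rV[R]_n)) dotvZl mul0r. Qed.
Lemma dotv0r (R : realType) n (z : 'rV[R]_n) : dotv z 0 = 0.
Proof. by rewrite dotvC dotv0l. Qed.

Lemma dotv_mulmx (R : realType) n m (A : 'M[R]_(n, m)) x y :
  dotv (x *m A) y = dotv x (y *m A^T).
Proof. by rewrite !dotvE trmx_mul trmxK mulmxA. Qed.

Lemma dotv_ge0 (R : realType) n (x : 'rV[R]_n) : 0 <= dotv x x.
Proof. by rewrite /dotv; apply: sumr_ge0 => i _; rewrite -expr2 sqr_ge0. Qed.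

Lemma dotv_eq0 (R : realType) n (x : 'rV[R]_n) : dotv x x = 0 -> x = 0.
Proof.
move=> /eqP; rewrite /dotv psumr_eq0; last by move=> i _; rewrite -expr2 sqr_ge0.
move=> /allP H; apply/rowP => j; rewrite mxE.
have := H j (mem_index_enum j); rewrite -expr2 sqrf_eq0 => /eqP.
by [].
Qed.



Lemma vnorm_ge0 (R : realType) n (x : 'rV[R]_n) : 0 <= vnorm x.
Proof. exact: sqrtr_ge0. Qed.

Lemma vnorm_sq (R : realType) n (x : 'rV[R]_n) : vnorm x ^+ 2 = dotv x x.
Proof. by rewrite /vnorm sqr_sqrtr // dotv_ge0. Qed.

Lemma vnorm_eq0 (R : realType) n (x : 'rV[R]_n) : vnorm x = 0 -> x = 0.
Proof. by move=> h; apply: dotv_eq0; rewrite -vnorm_sq h expr0n. Qed.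

Lemma vnorm0 (R : realType) n : vnorm (0 : 'rV[R]_n) = 0.
Proof. by rewrite /vnorm dotv0l sqrtr0. Qed.

Lemma vnormZ (R : realType) n a (x : 'rV[R]_n) : vnorm (a *: x) = `|a| * vnorm x.
Proof.
by rewrite /vnorm dotvZl dotvZr mulrA -expr2 sqrtrM ?sqr_ge0 // sqrtr_sqr.
Qed.

Lemma vnormN (R : realType) n (x : 'rV[R]_n) : vnorm (- x) = vnorm x.
Proof. by rewrite -scaleN1r vnormZ normrN normr1 mul1r. Qed.

Lemma vnormB (R : realType) n (x y : 'rV[R]_n) : vnorm (x - y) = vnorm (y - x).
Proof. by rewrite -vnormN opprB. Qed.

Lemma CS (R : realType) n (x y : 'rV[R]_n) : dotv x y <= vnorm x * vnorm y.
Proof.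
set a := vnorm x; set b := vnorm y.
have a0 : 0 <= a by exact: vnorm_ge0.
have b0 : 0 <= b by exact: vnorm_ge0.
have [a00|apos] := eqVneq a 0.
  by rewrite (vnorm_eq0 a00) dotv0l; exact: mulr_ge0.
have [b00|bpos] := eqVneq b 0.
  by rewrite (vnorm_eq0 b00) dotv0r; exact: mulr_ge0.
have h := dotv_ge0 (b *: x - a *: y).
rewrite !(dotvBl, dotvBr, dotvZl, dotvZr) -!vnorm_sq -/a -/b (dotvC y x) in h.
have ab : 0 < a * b by rewrite mulr_gt0 // lt_neqAle eq_sym ?apos ?bpos.
have : (a * b) * dotv x y <= (a * b) * (a * b) by nra.
by rewrite ler_pM2l.
Qed.

Lemma CSabs (R : realType) n (x y : 'rV[R]_n) : `|dotv x y| <= vnorm x * vnorm y.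
Proof.
rewrite ler_norml CS andbT -lerNl -dotvNl.
by apply: le_trans (CS _ _) _; rewrite vnormN.
Qed.

Lemma vnormD (R : realType) n (x y : 'rV[R]_n) : vnorm (x + y) <= vnorm x + vnorm y.
Proof.
rewrite -(ger0_norm (vnorm_ge0 (x + y))) -(ger0_norm (addr_ge0 (vnorm_ge0 x) (vnorm_ge0 y))).
rewrite -ler_sqr ?nnegrE ?normr_ge0 // !real_normK ?num_real //.
rewrite vnorm_sq !(dotvDl, dotvDr) (dotvC y x) -!vnorm_sq.
have := CS x y; nra.
Qed.

Lemma dotv_sq (R : realType) n (x y : 'rV[R]_n) :
  dotv (x - y) (x - y) = dotv x x - 2 * dotv x y + dotv y y.
Proof. rewrite !(dotvBl, dotvBr) (dotvC y x); ring. Qed.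



Definition ccont (T : topologicalType) (R : realType) k (f : T -> 'rV[R]_k) :=
  forall j, continuous (fun z => f z 0 j).

Lemma sum_cont (T : topologicalType) (R : realType) k (F : 'I_k -> T -> R) :
  (forall i, continuous (F i)) -> continuous (fun z => \sum_(i < k) F i z).
Proof. by move=> h; apply: continuous_big => //; exact: add_continuous. Qed.

Lemma ccont_cst (T : topologicalType) (R : realType) k (a : 'rV[R]_k) :
  ccont (fun _ : T => a).
Proof. by move=> j; exact: cst_continuous. Qed.

Lemma ccontD (T : topologicalType) (R : realType) k (f g : T -> 'rV[R]_k) :
  ccont f -> ccont g -> ccont (fun z => f z + g z).
Proof.
move=> hf hg j; under eq_fun do rewrite mxE.
by move=> z; apply: continuousD; [exact: hf|exact: hg].
Qed.

Lemma ccontN (T : topologicalType) (R : realType) k (f : T -> 'rV[R]_k) :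
  ccont f -> ccont (fun z => - f z).
Proof.
move=> hf j; under eq_fun do rewrite mxE.
by move=> z; apply: continuousN; exact: hf.
Qed.

Lemma ccontB (T : topologicalType) (R : realType) k (f g : T -> 'rV[R]_k) :
  ccont f -> ccont g -> ccont (fun z => f z - g z).
Proof. by move=> hf hg; apply: ccontD => //; exact: ccontN. Qed.

Lemma ccont_mulmx (T : topologicalType) (R : realType) k l (f : T -> 'rV[R]_k)
  (M : 'M[R]_(k, l)) : ccont f -> ccont (fun z => f z *m M).
Proof.
move=> hf j; under eq_fun do rewrite mxE.
apply: sum_cont => i z; apply: continuousM; first exact: hf.
exact: cst_continuous.
Qed.

Lemma dotv_cont (T : topologicalType) (R : realType) k (f g : T -> 'rV[R]_k) :
  ccont f -> ccont g -> continuous (fun z => dotv (f z) (g z)).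
Proof.
move=> hf hg; rewrite /dotv; apply: sum_cont => i z.
by apply: continuousM; [exact: hf|exact: hg].
Qed.

Lemma ccont_id (R : realType) k : ccont (fun z : 'rV[R]_k => z).
Proof. by move=> j; exact: coord_continuous. Qed.

Lemma mxnorm_le_vnorm (R : realType) k (x : 'rV[R]_k) : `|x| <= vnorm x.
Proof.
rewrite [leLHS]/Num.norm /= mx_normrE; apply: bigmax_le; first exact: vnorm_ge0.
move=> [i j] _ /=; rewrite (ord1 i).
rewrite -sqrtr_sqr /vnorm ler_sqrt; last exact: dotv_ge0.
rewrite /dotv (bigD1 j) //= -expr2 lerDl.
by apply: sumr_ge0 => l _; rewrite -expr2 sqr_ge0.
Qed.

Lemma bounded_vnorm (R : realType) k (A : set 'rV[R]_k) (B : R) :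
  (forall x, A x -> vnorm x <= B) -> bounded_set A.
Proof.
move=> hA; exists B; split; first by rewrite num_real.
move=> M BM x Ax /=; apply: le_trans (mxnorm_le_vnorm x) _.
exact: le_trans (hA x Ax) (ltW BM).
Qed.

Lemma closed_ge_fun (T : topologicalType) (R : realType) (f : T -> R) :
  continuous f -> closed [set z | 0 <= f z].
Proof.
move=> hf; have -> : [set z | 0 <= f z] = f @^-1` [set x | 0 <= x] by [].
apply: preimage_closed; last exact: closed_ge.
by move=> z _; exact: hf.
Qed.

Lemma exists_min (T : topologicalType) (R : realType) (f : T -> R) (D B : set T) z0 :
  D z0 -> B z0 -> compact (D `&` B) -> continuous f ->
  (forall z, D z -> f z <= f z0 -> B z) ->
  exists z, D z /\ forall z', D z' -> f z <= f z'.
Proof.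
move=> Dz0 Bz0 cDB cf hB.
have [z zin zmin] := compact_EVT_min (ex_intro _ z0 (conj Dz0 Bz0)) cDB
  (@continuous_subspaceT _ _ _ _ cf).
move: zin; rewrite inE => -[Dz Bz]; exists z; split => // z' Dz'.
have [le|lt] := leP (f z') (f z0).
  by apply: zmin; rewrite inE; split => //; exact: hB.
apply: le_trans (ltW lt); apply: zmin; rewrite inE; split => //.
Qed.

Lemma fo_principle (R : realType) (L Q : R) : 0 <= Q ->
  (forall l, 0 < l -> l <= 1 -> 0 <= 2 * L + l * Q) -> 0 <= L.
Proof.
move=> Q0 h; rewrite leNgt; apply/negP => L0.
have QL : 0 < Q - L by lra.
set l := - L / (Q - L).
have hl : l * (Q - L) = - L by rewrite /l mulfVK // gt_eqF.
have l0 : 0 < l by rewrite /l divr_gt0 // oppr_gt0.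
have l1 : l <= 1 by rewrite /l ler_pdivrMr // mul1r; lra.
have := h l l0 l1; nra.
Qed.



Lemma dotv_expand (R : realType) n (e d : 'rV[R]_n) (l : R) :
  dotv (e - l *: d) (e - l *: d) = dotv e e - 2 * l * dotv e d + l ^+ 2 * dotv d d.
Proof. rewrite !(dotvBl, dotvBr, dotvZl, dotvZr) (dotvC d e); ring. Qed.

Lemma fo2 (R : realType) (L Q : R) : 0 <= Q ->
  (forall l, 0 < l -> l <= 1 -> 0 <= l * (2 * L + l * Q)) -> 0 <= L.
Proof.
move=> Q0 h; apply: (fo_principle Q0) => l l0 l1.
by rewrite -(pmulr_rge0 _ l0); exact: h.
Qed.

Lemma sq_le (R : realType) (a C : R) : 0 <= a -> 0 <= C -> a ^+ 2 <= C ^+ 2 -> a <= C.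
Proof. by move=> a0 C0 h; rewrite -ler_sqr // nnegrE. Qed.

Lemma vnorm_le (R : realType) n (x : 'rV[R]_n) C : 0 <= C -> dotv x x <= C ^+ 2 -> vnorm x <= C.
Proof. by move=> C0 h; apply: sq_le => //; [exact: vnorm_ge0| rewrite vnorm_sq]. Qed.

Lemma K0 (R : realType) n (K : set 'rV[R]_n) : is_cone K -> K !=set0 -> K 0.
Proof. by move=> hc [x Kx]; rewrite -(scale0r x); apply: hc. Qed.

Lemma Kadd (R : realType) n (K : set 'rV[R]_n) : is_cone K -> is_convex K ->
  forall x y, K x -> K y -> K (x + y).
Proof.
move=> hc hv x y Kx Ky.
have h := hv x y (2^-1) Kx Ky.
have h2 : K (2^-1 *: x + (1 - 2^-1) *: y).
  by apply: h; apply/andP; split; [rewrite invr_ge0 ler0n | rewrite invf_le1 // ler1n].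
have := hc _ 2 h2 (ler0n _ 2).
have -> : 1 - 2^-1 = 2^-1 :> R by field.
by rewrite scalerDr !scalerA mulfV // !scale1r.
Qed.

Lemma dual_add (R : realType) n (K : set 'rV[R]_n) x y :
  dual_cone K x -> dual_cone K y -> dual_cone K (x + y).
Proof. by move=> hx hy z Kz; rewrite dotvDr addr_ge0 //; [exact: hx|exact: hy]. Qed.

Lemma dual_scale (R : realType) n (K : set 'rV[R]_n) x a :
  0 <= a -> dual_cone K x -> dual_cone K (a *: x).
Proof. by move=> a0 hx z Kz; rewrite dotvZr mulr_ge0 //; exact: hx. Qed.

Lemma dual0 (R : realType) n (K : set 'rV[R]_n) : dual_cone K 0.
Proof. by move=> z _; rewrite dotv0r. Qed.

Lemma dist_ge0 (R : realType) n (K : set 'rV[R]_n) w : 0 <= dist_set (dual_cone K) w.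
Proof.
apply: lb_le_inf; first by exists (vnorm (w - 0)), 0 => //; exact: dual0.
by move=> _ [z _ <-]; exact: vnorm_ge0.
Qed.

Lemma dist_le (R : realType) n (K : set 'rV[R]_n) w z :
  dual_cone K z -> dist_set (dual_cone K) w <= vnorm (w - z).
Proof.
move=> hz; apply: ge_inf; last by exists z.
by exists 0 => _ [z' _ <-]; exact: vnorm_ge0.
Qed.

Lemma cond_ge0 (R : realType) n m (A : 'M[R]_(n, m)) b (K : set 'rV[R]_n) :
  0 <= cond A b K.
Proof.
rewrite /cond; set S := [set _ | _ in _].
have [->|/set0P Sne] := eqVneq S set0; first by rewrite inf0.
apply: lb_le_inf => // _ [u _ <-].
by rewrite le_max dist_ge0.
Qed.

Lemma cond_le (R : realType) n m (A : 'M[R]_(n, m)) b (K : set 'rV[R]_n) u :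
  vnorm u = 1 ->
  cond A b K <= Num.max (dist_set (dual_cone K) (u *m A^T)) (dotv b u).
Proof.
move=> hu; apply: ge_inf; last by exists u.
by exists 0 => _ [u' _ <-]; rewrite le_max dist_ge0.
Qed.

Lemma condG (R : realType) n m (A : 'M[R]_(n, m)) b (K : set 'rV[R]_n) y s :
  dual_cone K s ->
  cond A b K * vnorm y <= Num.max (vnorm (y *m A^T + s)) (- dotv b y).
Proof.
move=> hs.
have [->|y0] := eqVneq y 0.
  by rewrite vnorm0 mulr0 le_max vnorm_ge0.
set a := vnorm y.
have a0 : 0 < a.
  rewrite lt_neqAle vnorm_ge0 andbT eq_sym; apply/eqP => /vnorm_eq0 h.
  by rewrite h eqxx in y0.
set u := - a^-1 *: y.
have hu : vnorm u = 1.
  by rewrite /u vnormZ normrN ger0_norm ?invr_ge0 ?ltW // mulVf // gt_eqF.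
have := cond_le A b K hu.
have ai : 0 <= a^-1 by rewrite invr_ge0 ltW.
have hd := dist_le (u *m A^T) (dual_scale ai hs).
have e1 : u *m A^T - a^-1 *: s = - a^-1 *: (y *m A^T + s).
  by rewrite /u -scalemxAl scalerDr !scaleNr.
rewrite e1 vnormZ normrN (ger0_norm ai) in hd.
have e2 : dotv b u = a^-1 * (- dotv b y) by rewrite /u dotvZr mulNr mulrN.
rewrite e2 => hc.
have : cond A b K <= a^-1 * Num.max (vnorm (y *m A^T + s)) (- dotv b y).
  apply: (le_trans hc); rewrite ge_max; apply/andP; split.
    apply: (le_trans hd); rewrite ler_wpM2l //.
    by rewrite le_max lexx.
  by rewrite ler_wpM2l // le_max lexx orbT.
by rewrite ler_pdivlMl // mulrC.
Qed.



Lemma cont_Cminus (T : topologicalType) (R : realType) (C : R) (g : T -> R) :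
  continuous g -> continuous (fun z => C - g z).
Proof.
move=> hg z; apply: (@continuousB _ _ _ (fun=> C) g z); last exact: hg.
exact: cst_continuous.
Qed.

Lemma ball_compact (R : realType) n (C : R) (K : set 'rV[R]_n) : 0 <= C -> closed K ->
  compact (K `&` [set x | dotv x x <= C ^+ 2]).
Proof.
move=> C0 cK; apply: bounded_closed_compact.
  by apply: (@bounded_vnorm _ _ _ C) => x [_ hx]; exact: vnorm_le.
apply: closedI => //.
have -> : [set x : 'rV[R]_n | dotv x x <= C ^+ 2] = [set x | 0 <= C ^+ 2 - dotv x x].
  by apply/seteqP; split => x /=; rewrite subr_ge0.
apply: closed_ge_fun; apply: cont_Cminus.
by apply: dotv_cont; exact: ccont_id.
Qed.

Lemma var_helper (R : realType) (E ez zz l : R) :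
  E <= E - 2 * l * ez + l ^+ 2 * zz -> 0 <= l * (2 * - ez + l * zz).
Proof.
move=> h; have -> : l * (2 * - ez + l * zz) = (E - 2 * l * ez + l ^+ 2 * zz) - E by ring.
by rewrite subr_ge0.
Qed.

Lemma bidual (R : realType) n (K : set 'rV[R]_n) : closed K -> is_convex K -> is_cone K ->
  K !=set0 -> forall p, (forall z, dual_cone K z -> 0 <= dotv p z) -> K p.
Proof.
move=> cK vK hK neK p hp.
have K0' := K0 hK neK.
set f := fun x : 'rV[R]_n => dotv (p - x) (p - x).
have fc : continuous f.
  by apply: dotv_cont; apply: ccontB; [exact: ccont_cst|exact: ccont_id|exact: ccont_cst|exact: ccont_id].
set C := 2 * vnorm p.
have C0 : 0 <= C by rewrite mulr_ge0 ?vnorm_ge0.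
have hB : forall z, K z -> f z <= f 0 -> dotv z z <= C ^+ 2.
  move=> z Kz; rewrite /f subr0 -!vnorm_sq => hz.
  have h1 : vnorm (p - z) <= vnorm p.
    by apply: sq_le => //; exact: vnorm_ge0.
  have h2 : vnorm z <= C.
    have -> : z = p - (p - z) by rewrite opprB addrC subrK.
    apply: (le_trans (vnormD _ _)); rewrite vnormN /C; lra.
  by rewrite ler_sqr // nnegrE ?vnorm_ge0.
have hB0 : dotv (0 : 'rV[R]_n) 0 <= C ^+ 2 by rewrite dotv0l sqr_ge0.
have [xs [Kxs xmin]] := @exists_min _ _ f K [set x | dotv x x <= C ^+ 2] 0 K0'
  hB0 (ball_compact C0 cK) fc hB.
set e := p - xs.
have he : forall z, K z -> dotv e z <= 0.
  move=> z Kz; rewrite -oppr_ge0.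
  apply: (@fo2 _ _ (dotv z z) (dotv_ge0 z)) => l l0 l1.
  have := xmin (xs + l *: z) (Kadd hK vK Kxs (hK _ _ Kz (ltW l0))).
  rewrite /f -/e (_ : p - (xs + l *: z) = e - l *: z); last by rewrite /e opprD addrA.
  rewrite dotv_expand; exact: var_helper.
have hs : 0 <= dotv e xs.
  apply: (@fo2 _ _ (dotv xs xs) (dotv_ge0 xs)) => l l0 l1.
  have h1l : 0 <= 1 - l by lra.
  have := xmin ((1 - l) *: xs) (hK _ _ Kxs h1l).
  rewrite /f -/e (_ : p - (1 - l) *: xs = e - (- l) *: xs); last first.
    by apply/rowP => i; rewrite /e !mxE; ring.
  rewrite dotv_expand => /var_helper.
  have -> : - l * (2 * - dotv e xs + - l * dotv xs xs) = l * (2 * dotv e xs + l * dotv xs xs) by ring.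
  done.
have hpe : dotv p e <= 0.
  rewrite -oppr_ge0 -dotvNr; apply: hp => z Kz.
  by rewrite dotvC dotvNl oppr_ge0; apply: he.
have ee : dotv e e = 0.
  have : dotv p e = dotv e e + dotv e xs.
    have hp' : p = e + xs by rewrite /e subrK.
    by rewrite {1}hp' dotvDl (dotvC xs e).
  have := dotv_ge0 e; lra.
have := dotv_eq0 ee; rewrite /e => /eqP; rewrite subr_eq0 => /eqP ->.
exact: Kxs.
Qed.



Lemma fst_cont (U V : topologicalType) : continuous (@fst U V).
Proof. move=> [a b]; exact: cvg_fst. Qed.
Lemma snd_cont (U V : topologicalType) : continuous (@snd U V).
Proof. move=> [a b]; exact: cvg_snd. Qed.

Lemma ccont11 (R : realType) m n :
  ccont (fun p : ('rV[R]_m * 'rV[R]_n * R)%type => p.1.1).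
Proof.
move=> j p.
have h1 : {for p, continuous (fun p : ('rV[R]_m * 'rV[R]_n * R)%type => p.1.1)}.
  apply: (@continuous_comp _ _ _ fst fst p); [exact: fst_cont|exact: fst_cont].
exact: (@continuous_comp _ _ _ (fun p : ('rV[R]_m * 'rV[R]_n * R)%type => p.1.1)
   (fun M : 'rV[R]_m => M 0 j) p h1 (@coord_continuous _ _ _ _ _ _)).
Qed.

Lemma ccont12 (R : realType) m n :
  ccont (fun p : ('rV[R]_m * 'rV[R]_n * R)%type => p.1.2).
Proof.
move=> j p.
have h1 : {for p, continuous (fun p : ('rV[R]_m * 'rV[R]_n * R)%type => p.1.2)}.
  apply: (@continuous_comp _ _ _ fst snd p); [exact: fst_cont|exact: snd_cont].
exact: (@continuous_comp _ _ _ (fun p : ('rV[R]_m * 'rV[R]_n * R)%type => p.1.2)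
   (fun M : 'rV[R]_n => M 0 j) p h1 (@coord_continuous _ _ _ _ _ _)).
Qed.

Lemma cont2 (R : realType) m n :
  continuous (fun p : ('rV[R]_m * 'rV[R]_n * R)%type => p.2).
Proof. exact: snd_cont. Qed.



Lemma abs_le_sq (R : realType) (a r : R) : 0 <= r -> a ^+ 2 <= r ^+ 2 -> `|a| <= r.
Proof.
move=> r0 h; apply: sq_le => //; by rewrite ?normr_ge0 ?real_normK ?num_real.
Qed.

Lemma vnorm_sub_le (R : realType) n (c v : 'rV[R]_n) : vnorm v <= vnorm c + vnorm (c - v).
Proof.
have e : v = c - (c - v) by rewrite opprB addrCA subrr addr0.
by rewrite {1}e; apply: (le_trans (vnormD _ _)); rewrite vnormN.
Qed.

Lemma dual_box (R : realType) n m (A : 'M[R]_(n, m)) b c (K : set 'rV[R]_n) t rho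
  (y' : 'rV[R]_m) v (r : R) :
  0 < cond A b K -> 0 <= rho -> dual_cone K (v - y' *m A^T) -> 0 <= r ->
  dotv (c - v) (c - v) + (t - dotv b y' + r) ^+ 2 <= rho ^+ 2 ->
  [/\ vnorm y' <= (vnorm c + rho + `|t|) / cond A b K,
      vnorm v <= vnorm c + rho &
      r <= rho + `|t| + vnorm b * ((vnorm c + rho + `|t|) / cond A b K)].
Proof.
move=> cpos rho0 hs r0 hf.
have h1 : vnorm (c - v) <= rho.
  apply: vnorm_le => //; have := sqr_ge0 (t - dotv b y' + r); lra.
have h2 : `|t - dotv b y' + r| <= rho.
  apply: abs_le_sq => //; have := dotv_ge0 (c - v); lra.
have hv : vnorm v <= vnorm c + rho.
  by apply: (le_trans (vnorm_sub_le c v)); lra.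
have := @condG _ _ _ A b K y' (v - y' *m A^T) hs; rewrite (_ : y' *m A^T + (v - y' *m A^T) = v); last first.
  by rewrite addrC subrK.
move=> hc.
have hy : vnorm y' <= (vnorm c + rho + `|t|) / cond A b K.
  rewrite ler_pdivlMr // mulrC; apply: (le_trans hc); rewrite ge_max; apply/andP; split.
    by have := normr_ge0 t; lra.
  move: h2; rewrite ler_norml => /andP[_ h2].
  have := vnorm_ge0 c; have := ler_norm (- t); rewrite normrN; lra.
split => //.
move: h2; rewrite ler_norml => /andP[_ h2].
have hb := CS b y'.
have hbb : vnorm b * vnorm y' <= vnorm b * ((vnorm c + rho + `|t|) / cond A b K).
  by rewrite ler_wpM2l // vnorm_ge0.
have := ler_norm (- t); rewrite normrN; lra.
Qed.



Lemma dual_min (R : realType) n m (A : 'M[R]_(n, m)) b c (K : set 'rV[R]_n) t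
  (y : 'rV[R]_m) :
  closed K -> 0 < cond A b K -> dual_cone K (c - y *m A^T) ->
  exists ys vs rs, [/\ dual_cone K (vs - ys *m A^T), 0 <= rs &
    forall y' v' r', dual_cone K (v' - y' *m A^T) -> 0 <= r' ->
      dotv (c - vs) (c - vs) + (t - dotv b ys + rs) ^+ 2 <=
      dotv (c - v') (c - v') + (t - dotv b y' + r') ^+ 2].
Proof.
move=> cK cpos hy.
pose T := ('rV[R]_m * 'rV[R]_n * R)%type.
pose D := [set p : T | dual_cone K (p.1.2 - p.1.1 *m A^T) /\ 0 <= p.2].
pose f := fun p : T => dotv (c - p.1.2) (c - p.1.2) + (t - dotv b p.1.1 + p.2) ^+ 2.
set rho := `|t - dotv b y|.
have rho0 : 0 <= rho := normr_ge0 _.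
set B1 := (vnorm c + rho + `|t|) / cond A b K.
set B2 := vnorm c + rho.
set B3 := rho + `|t| + vnorm b * B1.
have B10 : 0 <= B1.
  apply: divr_ge0; last exact: ltW.
  have := vnorm_ge0 c; have := normr_ge0 t; lra.
have B20 : 0 <= B2 by have := vnorm_ge0 c; rewrite /B2; lra.
pose Bx := [set p : T | dotv p.1.1 p.1.1 <= B1 ^+ 2 /\ dotv p.1.2 p.1.2 <= B2 ^+ 2
  /\ p.2 <= B3].
pose z0 : T := (y, c, 0).
have Dz0 : D z0 by split => //=.
have fz0 : f z0 = rho ^+ 2 by rewrite /f /= subrr dotv0l add0r addr0 real_normK ?num_real.
have hB : forall z, D z -> f z <= f z0 -> Bx z.
  move=> [[y' v'] r'] [/= hs r0]; rewrite fz0 /f /= => hf.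
  have [h1 h2 h3] := dual_box cpos rho0 hs r0 hf.
  split; last split => //.
  - by rewrite -vnorm_sq ler_sqr // nnegrE vnorm_ge0.
  - by rewrite -vnorm_sq ler_sqr // nnegrE vnorm_ge0.
have Bz0 : Bx z0 by apply: hB => //; rewrite lexx.
have fc : continuous f.
  have h1 : continuous (fun p : T => dotv (c - p.1.2) (c - p.1.2)).
    by apply: dotv_cont; apply: ccontB; (exact: ccont_cst || exact: ccont12).
  have hg : continuous (fun p : T => t - dotv b p.1.1 + p.2).
    have hd : continuous (fun p : T => t - dotv b p.1.1).
      by apply: cont_Cminus; apply: dotv_cont; [exact: ccont_cst| exact: ccont11].
    move=> q; exact: (continuousD (hd q) (@cont2 _ _ _ q)).
  move=> p; exact: (continuousD (h1 p) (continuousM (hg p) (hg p))).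
have cD : closed D.
  have -> : D = (\bigcap_(x in K) [set p : T | 0 <= dotv x (p.1.2 - p.1.1 *m A^T)])
       `&` [set p : T | 0 <= p.2].
    apply/seteqP; split.
      by move=> p [hs r0]; split => // x Kx; exact: hs.
    by move=> p [hs r0]; split => // x Kx; exact: hs.
  apply: closedI; last exact: closed_ge_fun (@cont2 _ _ _).
  apply: closed_bigI => x Kx; apply: closed_ge_fun; apply: dotv_cont.
    exact: ccont_cst.
  apply: ccontB; [exact: ccont12| apply: ccont_mulmx; exact: ccont11].
have cB : closed Bx.
  have -> : Bx = [set p : T | 0 <= B1 ^+ 2 - dotv p.1.1 p.1.1] `&`
     ([set p : T | 0 <= B2 ^+ 2 - dotv p.1.2 p.1.2] `&` [set p : T | 0 <= B3 - p.2]).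
    by apply/seteqP; split => p /=; rewrite !subr_ge0.
  apply: closedI; last apply: closedI.
  - apply: closed_ge_fun; apply: cont_Cminus; apply: dotv_cont; exact: ccont11.
  - apply: closed_ge_fun; apply: cont_Cminus; apply: dotv_cont; exact: ccont12.
  - apply: closed_ge_fun; apply: cont_Cminus; exact: cont2.
have cDB : compact (D `&` Bx).
  apply: (subclosed_compact (closedI cD cB)
    (compact_setX (compact_setX (ball_compact B10 (@closedT _))
                                (ball_compact B20 (@closedT _)))
                  (@segment_compact R 0 B3))).
  move=> [[y' v'] r'] [[_ r0] [h1 [h2 h3]]] /=; split; first by [].
  by rewrite /= in_itv /= r0 h3.
have [[[ys vs] rs] [[hs r0] hmin]] := exists_min Dz0 Bz0 cDB fc hB.
exists ys, vs, rs; split => // y' v' r' hs' r0'.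
by apply: (hmin (y', v', r')).
Qed.



Lemma var2 (R : realType) (E be eg gg ga l : R) :
  E + be ^+ 2 <= E - 2 * l * eg + l ^+ 2 * gg + (be - l * ga) ^+ 2 ->
  0 <= l * (2 * - (eg + be * ga) + l * (gg + ga ^+ 2)).
Proof.
move=> h.
have -> : l * (2 * - (eg + be * ga) + l * (gg + ga ^+ 2)) =
  (E - 2 * l * eg + l ^+ 2 * gg + (be - l * ga) ^+ 2) - (E + be ^+ 2) by ring.
by rewrite subr_ge0.
Qed.

Lemma strong_dual (R : realType) n m (A : 'M[R]_(n, m)) b c (K : set 'rV[R]_n) :
  closed K -> is_convex K -> is_cone K -> primal_feas A b K !=set0 ->
  has_lbound [set dotv c x | x in primal_feas A b K] -> 0 < cond A b K ->
  forall y, dual_optimal A b c K y -> primal_val A b c K <= dotv b y.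
Proof.
move=> cK vK hK [x0 [x0A Kx0]] hlb cpos y [yfeas yopt].
have neK : K !=set0 by exists x0.
set val := primal_val A b c K.
have valle : forall x, x *m A = b -> K x -> val <= dotv c x.
  by move=> x hx Kx; apply: ge_inf => //; exists x.
set d := dotv b y.
rewrite leNgt; apply/negP => dval.
set t := (d + val) / 2.
have dt : d < t by rewrite /t; lra.
have tv : t < val by rewrite /t; lra.
have [ys [vs [rs [hs r0 hmin]]]] := @dual_min _ _ _ A b c K t y cK cpos yfeas.
set e := c - vs.
set beta := t - dotv b ys + rs.
set ss := vs - ys *m A^T.
have hmin' : forall y' v' r', dual_cone K (v' - y' *m A^T) -> 0 <= r' ->
    dotv e e + beta ^+ 2 <= dotv (c - v') (c - v') + (t - dotv b y' + r') ^+ 2.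
  exact: hmin.
have ha : forall w, dotv e (w *m A^T) + beta * dotv b w <= 0.
  move=> w; rewrite -oppr_ge0.
  apply: (@fo2 _ _ (dotv (w *m A^T) (w *m A^T) + dotv b w ^+ 2)).
    by rewrite addr_ge0 ?dotv_ge0 ?sqr_ge0.
  move=> l l0 l1.
  have hd : dual_cone K ((vs + l *: (w *m A^T)) - (ys + l *: w) *m A^T).
    by rewrite mulmxDl -scalemxAl opprD addrACA subrr addr0.
  have := hmin' (ys + l *: w) (vs + l *: (w *m A^T)) rs hd r0.
  rewrite (_ : c - (vs + l *: (w *m A^T)) = e - l *: (w *m A^T)); last by rewrite /e opprD addrA.
  rewrite (_ : t - dotv b (ys + l *: w) + rs = beta - l * dotv b w); last first.
    by rewrite dotvDr dotvZr /beta; ring.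
  rewrite dotv_expand; exact: var2.
have eA : e *m A = - (beta *: b).
  set w := e *m A + beta *: b.
  have := ha w; rewrite -dotv_mulmx -dotvZl -dotvDl -/w => hw.
  have w0 : w = 0 by apply: dotv_eq0; apply/eqP; rewrite eq_le hw dotv_ge0.
  by apply/eqP; rewrite -subr_eq0 opprK -/w w0.
have hb : forall z, dual_cone K z -> dotv e z <= 0.
  move=> z hz; rewrite -oppr_ge0.
  apply: (@fo2 _ _ (dotv z z) (dotv_ge0 z)) => l l0 l1.
  have hd : dual_cone K ((vs + l *: z) - ys *m A^T).
    rewrite addrAC; apply: dual_add => //; exact: dual_scale (ltW l0) hz.
  have := hmin' ys (vs + l *: z) rs hd r0.
  rewrite (_ : c - (vs + l *: z) = e - l *: z); last by rewrite /e opprD addrA.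
  rewrite -/beta dotv_expand => h.
  apply: (@var_helper _ (dotv e e)); lra.
have hb' : 0 <= dotv e ss.
  apply: (@fo2 _ _ (dotv ss ss) (dotv_ge0 ss)) => l l0 l1.
  have hd : dual_cone K ((vs - l *: ss) - ys *m A^T).
    rewrite (_ : (vs - l *: ss) - ys *m A^T = (1 - l) *: ss); last first.
      by rewrite /ss; apply/rowP => i; rewrite !mxE; ring.
    by apply: dual_scale => //; lra.
  have := hmin' ys (vs - l *: ss) rs hd r0.
  rewrite (_ : c - (vs - l *: ss) = e - (- l) *: ss); last first.
    by apply/rowP => i; rewrite /e !mxE; ring.
  rewrite -/beta dotv_expand => h.
  have := @var_helper _ (dotv e e) (dotv e ss) (dotv ss ss) (- l) ltac:(lra).
  have -> : - l * (2 * - dotv e ss + - l * dotv ss ss) = l * (2 * dotv e ss + l * dotv ss ss) by ring.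
  done.
have hc : 0 <= beta.
  apply: (@fo2 _ _ 1 ler01) => l l0 l1.
  have hr : 0 <= rs + l by lra.
  have := hmin' ys vs (rs + l) hs hr; rewrite -/e.
  have -> : t - dotv b ys + (rs + l) = beta + l by rewrite /beta; ring.
  have -> : (beta + l) ^+ 2 = beta ^+ 2 + l * (2 * beta + l * 1) by ring.
  lra.
have hc' : 0 <= - (beta * rs).
  apply: (@fo2 _ _ (rs ^+ 2) (sqr_ge0 rs)) => l l0 l1.
  have hr : 0 <= rs - l * rs.
    by rewrite (_ : rs - l * rs = rs * (1 - l)); [apply: mulr_ge0 => //; lra| ring].
  have := hmin' ys vs (rs - l * rs) hs hr; rewrite -/e.
  have -> : t - dotv b ys + (rs - l * rs) = beta - l * rs by rewrite /beta; ring.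
  have -> : (beta - l * rs) ^+ 2 = beta ^+ 2 + l * (2 * - (beta * rs) + l * rs ^+ 2) by ring.
  lra.
have hcdec : c = e + ss + ys *m A^T by rewrite /e /ss; apply/rowP => i; rewrite !mxE; ring.
have eys : dotv e (ys *m A^T) = - (beta * dotv b ys).
  by rewrite -dotv_mulmx eA dotvNl dotvZl.
have iden : dotv e c + beta * t = dotv e e + beta ^+ 2 + dotv e ss - beta * rs.
  rewrite {1}hcdec !dotvDr eys /t.
  have -> : (d + val) / 2 = beta + dotv b ys - rs by rewrite /beta /t; ring.
  ring.
have [eb0|ebpos] := eqVneq (dotv e e + beta ^+ 2) 0.
  have ee0 : dotv e e = 0 by have := dotv_ge0 e; have := sqr_ge0 beta; lra.
  have b0 : beta = 0.
    by apply/eqP; rewrite -sqrf_eq0; apply/eqP; have := dotv_ge0 e; have := sqr_ge0 beta; lra.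
  have e0 := dotv_eq0 ee0.
  have cvs : c = vs by apply/eqP; rewrite -subr_eq0 -/e e0.
  have feas : dual_feas A c K ys by rewrite /dual_feas /= cvs.
  have := yopt ys feas; rewrite -/d.
  have : dotv b ys = t + rs by move: b0; rewrite /beta => hb0; lra.
  lra.
have ebp : 0 < dotv e e + beta ^+ 2.
  by rewrite lt_neqAle eq_sym ebpos addr_ge0 ?dotv_ge0 ?sqr_ge0.
have Kx : K (- e).
  apply: (bidual cK vK hK neK) => z hz.
  by rewrite dotvNl oppr_ge0; exact: hb.
have xA : (- e) *m A = beta *: b by rewrite mulNmx eA opprK.
have cx : dotv c (- e) < beta * t.
  rewrite dotvNr dotvC; lra.
have [bpos|] := ltP 0 beta.
  set x := beta^-1 *: (- e).
  have Kx' : K x by apply: hK => //; rewrite invr_ge0 ltW.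
  have xA' : x *m A = b by rewrite -scalemxAl xA scalerA mulVf ?gt_eqF // scale1r.
  have := valle x xA' Kx'.
  rewrite /x dotvZr.
  have : beta^-1 * dotv c (- e) < t.
    by rewrite ltr_pdivrMl // mulrC.
  lra.
move=> ble; have b0 : beta = 0 by apply/eqP; rewrite eq_le ble hc.
rewrite b0 mul0r in cx; rewrite b0 scale0r in xA.
set lam := (dotv c x0 - val + 1) / (- dotv c (- e)).
have lam0 : 0 <= lam.
  apply: divr_ge0; last by rewrite oppr_ge0 ltW.
  have := valle x0 x0A Kx0; lra.
have Kx1 : K (x0 + lam *: (- e)) by apply: (Kadd hK vK Kx0); apply: hK.
have xA1 : (x0 + lam *: (- e)) *m A = b by rewrite mulmxDl -scalemxAl xA scaler0 addr0.
have := valle _ xA1 Kx1.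
have hl : lam * dotv c (- e) = - (dotv c x0 - val + 1).
  by rewrite /lam invrN mulrN mulNr divfK // lt_eqF.
rewrite dotvDr dotvZr hl; lra.
Qed.


Theorem mainTheorem6 (R : realType) (n m : nat) (A : 'M[R]_(n, m))
  (b : 'rV[R]_m) (c : 'rV[R]_n) (K : set 'rV[R]_n)
  (hb : exists x0 : 'rV[R]_n, x0 *m A = b)
  (hKclosed : closed K) (hKconvex : is_convex K) (hKcone : is_cone K)
  (hKint : K° !=set0)
  (hfeas : primal_feas A b K !=set0)
  (hfinite : has_lbound [set dotv c x | x in primal_feas A b K])
  (hcond : cond A b K != 0)
  (y : 'rV[R]_m) (hy : dual_optimal A b c K y) :
  vnorm y <= Num.max (vnorm c) (- primal_val A b c K) / cond A b K.
Proof.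
have cpos : 0 < cond A b K by rewrite lt_neqAle eq_sym hcond cond_ge0.
have hsd := strong_dual hKclosed hKconvex hKcone hfeas hfinite cpos hy.
case: hy => yfeas _.
have := @condG _ _ _ A b K y (c - y *m A^T) yfeas.
rewrite addrC subrK => h.
rewrite ler_pdivlMr // mulrC; apply: (le_trans h).
rewrite ge_max !le_max lexx /=; apply/orP; right; by rewrite lerN2.
Qed.
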